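(* Let $d\ge 2$ and $\ell\ge 3$. The cyclic Kautz digraph $CK(d,\ell)$ is isomorphic to the line digraph of the subKautz digraph $sK(d,\ell-1)$, that is, $CK(d,\ell)\cong L(sK(d,\ell-1))$, via the map sending the arc $(x_1x_2\ldots x_{\ell-1},\,x_2\ldots x_{\ell-1}x_\ell)$ of $sK(d,\ell-1)$ to the vertex $x_1x_2\ldots x_\ell$ of $CK(d,\ell)$.
   Context: All words are over the alphabet $\mathbb Z_{d+1}=\{0,1,\ldots,d\}$. The subKautz digraph $sK(d,\ell)$ ($d,\ell\ge 2$) has vertex set $\{x_1x_2\ldots x_\ell : x_i\neq x_{i+1},\ i=1,\ldots,\ell-1\}$ and arcs $x_1x_2\ldots x_\ell\to x_2\ldots x_\ell x_{\ell+1}$ for every $x_{\ell+1}\in\mathbb Z_{d+1}$ with $x_{\ell+1}\neq x_1$ and $x_{\ell+1}\neq x_\ell$. The cyclic Kautz digraph $CK(d,\ell)$ has vertex set $\{x_1\ldots x_\ell : x_i\neq x_{i+1}\ (i=1,\ldots,\ell-1),\ x_\ell\neq x_1\}$ and arcs $x_1x_2\ldots x_\ell\to x_2\ldots x_\ell y$ for every $y\in\mathbb Z_{d+1}$ with $y\neq x_2$ and $y\neq x_\ell$. The line digraph $L(G)$ of a digraph $G$ has as vertices the arcs of $G$, with $(u,v)$ adjacent to $(w,z)$ in $L(G)$ iff $v=w$. *)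

(* Defs.v *)
From mathcomp Require Import all_boot.
Unset Strict Implicit. Unset Printing Implicit Defensive.

Definition word (d : nat) := seq 'I_d.+1.

Definition no_rep (d : nat) (x : word d) : bool := sorted (fun a b => a != b) x.

Definition sK_vertex (d l : nat) (x : word d) : bool := (size x == l) && @no_rep d x.

Definition sK_arc (d l : nat) (x y : word d) : Prop :=
  sK_vertex d l x /\ sK_vertex d l y /\
  exists z : 'I_d.+1,
    y = rcons (behead x) z /\ z != head ord0 x /\ z != last ord0 x.

Definition CK_vertex (d l : nat) (x : word d) : bool :=
  sK_vertex d l x && (last ord0 x != head ord0 x).

Definition CK_arc (d l : nat) (x y : word d) : Prop :=
  CK_vertex d l x /\ CK_vertex d l y /\
  exists z : 'I_d.+1,
    y = rcons (behead x) z /\ z != nth ord0 x 1 /\ z != last ord0 x.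

Definition line_vertex (T : Type) (A : T -> T -> Prop) (p : T * T) : Prop :=
  A p.1 p.2.

Definition line_arc (T : Type) (p q : T * T) : Prop := p.2 = q.1.

Definition dig_iso (T U : Type) (VG : T -> Prop) (AG : T -> T -> Prop)
  (VH : U -> Prop) (AH : U -> U -> Prop) (f : T -> U) : Prop :=
  [/\ (forall x, VG x -> VH (f x)),
      (forall x y, VG x -> VG y -> f x = f y -> x = y),
      (forall y, VH y -> exists2 x, VG x & f x = y) &
      (forall x y, VG x -> VG y -> (AG x y <-> AH (f x) (f y)))].

Definition arc_to_word (d : nat) (p : word d * word d) : word d :=
  rcons p.1 (last ord0 p.2).

(* Main.v *)
Require Import Defs.
From mathcomp Require Import all_boot.

Lemma rcons_inj2 (T : eqType) (s1 s2 : seq T) a b :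
  rcons s1 a = rcons s2 b -> s1 = s2 /\ a = b.
Proof.
move=> h; have := congr1 (@last T a) h; rewrite !last_rcons => eab.
subst b; split=> //; exact: rcons_injl h.
Qed.

Theorem mainTheorem1 (d l : nat) (hd : 2 <= d) (hl : 3 <= l) :
  @dig_iso (word d * word d) (word d) (@line_vertex (word d) (sK_arc d l.-1)) (@line_arc (word d))
          (fun x => CK_vertex d l x) (CK_arc d l) (arc_to_word d).
Proof.
case: l hl => [|[|[|n]]] // _ /=.
have V : forall p : word d * word d, @line_vertex _ (sK_arc d n.+2) p ->
  exists a b s z, (p.1 = a :: b :: s /\ p.2 = rcons (b :: s) z) /\
     [/\ size s = n, path (fun u v => u != v) a (b :: s), z != a & z != last b s].
  case=> x y [/andP [sx nx] [/andP [sy ny] [z [-> [za zl]]]]] /=.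
  case: x sx nx sy ny za zl => [|a [|b s]] //= /eqP [sz] nx _ _ za zl.
  by exists a, b, s, z; split; split.
split.
- move=> [x y] /V [a [b [s [z [[/= -> ->] [ss ns za zl]]]]]].
  rewrite /CK_vertex /sK_vertex /arc_to_word /= last_rcons size_rcons ss eqxx /=.
  rewrite /no_rep /= rcons_path last_rcons za andbT. move: ns => /= /andP [-> ->] /=. by rewrite eq_sym.
- move=> p q /V [a [b [s [z [[e1 e2] _]]]]] /V [a' [b' [s' [z' [[e1' e2'] _]]]]].
  rewrite /arc_to_word e2 e2' !last_rcons => /rcons_inj2 [h hz].
  case: p q e1 e2 e1' e2' h => [x y] [x' y'] /= -> -> -> -> [-> -> ->].
  by rewrite hz.
- move=> w /andP [/andP [/eqP sw nw] lw].
  case/lastP: w sw nw lw => [|x z] //; rewrite size_rcons => -[sx].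
  case: x sx => [|a [|b s]] //= [ss].
  rewrite /no_rep /=; rewrite -rcons_cons rcons_path => /andP [ns zl]; rewrite last_rcons => za.
  exists (a :: b :: s, rcons (b :: s) z); last by rewrite /arc_to_word /= last_rcons.
  split; first by rewrite /sK_vertex /= ss eqxx /= ns; case/andP: zl.
  split; first by rewrite /sK_vertex /no_rep /= size_rcons ss eqxx /= rcons_path.
  exists z; split => //; split; first by []. by rewrite /= eq_sym; case/andP: zl.
- move=> p q /V [a [b [s [z [[e1 e2] [ss ns za zl]]]]]] /V [a' [b' [s' [z' [[e1' e2'] [ss' ns' za' zl']]]]]].
  rewrite /line_arc /arc_to_word e1 e2 e1' e2' !last_rcons /=.
  have VP : forall a b s z, size s = n -> path (fun u v => u != v) a (b :: s) -> z != a -> z != last b s ->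
      CK_vertex d n.+3 [:: a, b & rcons s z].
    move=> a0 b0 s0 z0 h0 n0 za0 zl0.
    rewrite /CK_vertex /sK_vertex /= size_rcons h0 eqxx /= last_rcons za0 andbT.
    rewrite /no_rep /= rcons_path; move: n0 => /= /andP [-> ->] /=; by rewrite eq_sym.
  have C1 := VP a b s z ss ns za zl.
  have C2 := VP a' b' s' z' ss' ns' za' zl'.
  split.
  + move=> h. split; first exact: C1. split; first exact: C2.
    exists z'; split; first by rewrite /= -[LHS]/(rcons [:: a', b' & s'] z') -h.
    rewrite /= last_rcons.
    have hz : z = last b' s' by have := congr1 (last b) h; rewrite /= last_rcons.
    by case: h => ea _; rewrite ea hz; split.
  + case=> _ [_ [z0 [/= h [_ _]]]].
    move: h; rewrite -!rcons_cons => /rcons_inj2 [h _].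
    by rewrite h.
Qed.
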